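(* Let $\Omega\subset\mathbb{R}^2$ be a smooth bounded domain, $(u_p)_{p>1}$ solutions of $-\Delta u=|u|^{p-1}u$ in $\Omega$, $u=0$ on $\partial\Omega$, with $p\int_\Omega|\nabla u_p|^2dx\to\beta\in\mathbb{R}$, and let $k\ge1$ and families $(x_{i,p})$, $i=1,\dots,k$, with $p|u_p(x_{i,p})|^{p-1}\to+\infty$, satisfy (along a sequence $p\to+\infty$) $(\mathcal P_1^k)$, $(\mathcal P_2^k)$, $(\mathcal P_3^k)$. Let $(x_p)\subset\Omega$ with $p|u_p(x_p)|^{p-1}\to+\infty$, $\mu_p:=(p|u_p(x_p)|^{p-1})^{-1/2}$, and let $i\in\{1,\dots,k\}$ be such that (up to a sequence) $R_{k,p}(x_p)=|x_{i,p}-x_p|$. If $\frac{|x_p-x_{i,p}|}{\mu_{i,p}}\to+\infty$, then $\frac{\mu_{i,p}}{\mu_p}\to0$.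
   Context: $\mu_{i,p}:=(p|u_p(x_{i,p})|^{p-1})^{-1/2}$, $R_{k,p}(x):=\min_{i\le k}|x-x_{i,p}|$, $U(x)=\log\left(\frac{1}{1+\frac18|x|^2}\right)^2$. $(\mathcal P_1^k)$: $|x_{i,p}-x_{j,p}|/\mu_{i,p}\to+\infty$ for $i\ne j$. $(\mathcal P_2^k)$: for each $i$, $v_{i,p}(x):=\frac{p}{u_p(x_{i,p})}(u_p(x_{i,p}+\mu_{i,p}x)-u_p(x_{i,p}))\to U$ in $C^1_{loc}(\mathbb{R}^2)$. $(\mathcal P_3^k)$: $\exists C>0$ with $pR_{k,p}(x)^2|u_p(x)|^{p-1}\le C$ for $p$ large and all $x\in\Omega$. *)

(* Defs.v *)
From mathcomp Require Import all_boot all_order all_algebra.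
From mathcomp Require Import all_classical all_reals all_analysis.
Import Order.TTheory GRing.Theory Num.Theory numFieldNormedType.Exports.
Set Implicit Arguments. Unset Strict Implicit. Unset Printing Implicit Defensive.
Local Open Scope classical_set_scope.
Local Open Scope ring_scope.

Section Defs.
Variable R : realType.
Local Notation P := (R * R)%type.

(* Euclidean norm on R^2 (the library norm on R * R is the max norm). *)
Definition enorm (x : P) : R := Num.sqrt (x.1 ^+ 2 + x.2 ^+ 2).

Definition d1 (f : P -> R) (x : P) : R := 'D_((1:R), (0:R)) f x.
Definition d2 (f : P -> R) (x : P) : R := 'D_((0:R), (1:R)) f x.
Definition lap (f : P -> R) (x : P) : R := d1 (d1 f) x + d2 (d2 f) x.
Definition grad_sq (f : P -> R) (x : P) : R := d1 f x ^+ 2 + d2 f x ^+ 2.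

Definition C2_at (f : P -> R) (x : P) : Prop :=
  [/\ differentiable f x, differentiable (d1 f) x, differentiable (d2 f) x,
      {for x, continuous (d1 (d1 f))} /\ {for x, continuous (d2 (d1 f))}
    & {for x, continuous (d1 (d2 f))} /\ {for x, continuous (d2 (d2 f))}].

Definition smooth1 (g : R -> R) : Prop :=
  forall (n : nat) (t : R), derivable (derive1n n g) t 1.

Definition boundary (O : set P) : set P := closure O `\` O.

(* smooth boundary: near each boundary point, after a rotation of the
   coordinate axes, O is the open supergraph of a C^infinity function *)
Definition smooth_boundary (O : set P) : Prop :=
  forall y0, boundary O y0 ->
  exists r : R, 0 < r /\ exists c s : R, c ^+ 2 + s ^+ 2 = 1 /\
  exists g : R -> R, smooth1 g /\
  forall x : P, enorm (x - y0) < r ->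
    (O x <-> g (c * x.1 + s * x.2) < - s * x.1 + c * x.2).

Definition smooth_bounded_domain (O : set P) : Prop :=
  [/\ open O, connected O, O !=set0,
      (exists M : R, forall x, O x -> enorm x <= M) & smooth_boundary O].

Definition LE_solution (O : set P) (p : R) (u : P -> R) : Prop :=
  [/\ forall x, O x -> C2_at u x,
      {within closure O, continuous u},
      (forall x, boundary O x -> u x = 0)
    & forall x, O x -> - lap u x = (`|u x| `^ (p - 1)) * u x].

Definition energy (O : set P) (u : P -> R) : \bar R :=
  (\int[(@lebesgue_measure R \x @lebesgue_measure R)%E]_(x in O) (grad_sq u x)%:E)%E.

Definition mu_of (p : R) (u : P -> R) (x : P) : R :=
  (p * `|u x| `^ (p - 1)) `^ (- (2%:R)^-1).

Definition Rk (k : nat) (xs : 'I_k -> P) (x : P) : R :=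
  inf [set enorm (x - xs j) | j in [set: 'I_k]].

Definition Ulim (x : P) : R := ln ((1 + (8%:R)^-1 * enorm x ^+ 2)^-1 ^+ 2).

Definition rescale (p : R) (u : P -> R) (x0 : P) (m : R) (y : P) : R :=
  p / u x0 * (u (x0.1 + m * y.1, x0.2 + m * y.2) - u x0).

(* C^1_loc(R^2) convergence of v n (defined on (O - x0 n)/m n) to V:
   every closed ball is eventually contained in the domain of v n, and
   v n, grad v n converge uniformly on it to V, grad V *)
Definition C1loc_cvg (O : set P) (x0 : nat -> P) (m : nat -> R)
    (v : nat -> P -> R) (V : P -> R) : Prop :=
  forall r : R, 0 < r ->
    (\forall n \near \oo, forall y : P, enorm y <= r ->
        O ((x0 n).1 + m n * y.1, (x0 n).2 + m n * y.2)) /\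
    forall e : R, 0 < e -> \forall n \near \oo, forall y : P, enorm y <= r ->
      [/\ `|v n y - V y| < e, `|d1 (v n) y - d1 V y| < e
        & `|d2 (v n) y - d2 V y| < e].

End Defs.

(* Main.v *)
Require Import Defs.
From mathcomp Require Import all_boot all_order all_algebra.
From mathcomp Require Import all_classical all_reals all_analysis.
Import Order.TTheory GRing.Theory Num.Theory numFieldNormedType.Exports.
Local Open Scope classical_set_scope.
Local Open Scope ring_scope.

Lemma key (R:realType) (q a d C : R): 0<q -> 0<a -> 0<d -> d^+2*q <= C ->
 0 <= a / q `^ (- 2^-1) <= Num.sqrt C * (a/d).
Proof.
move=> q0 a0 d0 H.
have C0 : 0 <= C by apply: le_trans H; rewrite mulr_ge0 // ?sqr_ge0 ?ltW.
rewrite powRN powR12_sqrt; last exact: ltW. rewrite invrK.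
have s0 : 0 < Num.sqrt q by rewrite sqrtr_gt0.
apply/andP; split; first by rewrite mulr_ge0 //; exact: ltW.
have ds : d * Num.sqrt q <= Num.sqrt C.
  rewrite -(ler_pXn2r (_ : (0 < 2)%N)) ?nnegrE ?sqrtr_ge0 //; last first.
    by rewrite mulr_ge0 // ?sqrtr_ge0 // ltW.
  by rewrite exprMn !sqr_sqrtr //; exact: ltW.
have -> : a * Num.sqrt q = (a / d) * (d * Num.sqrt q).
  by rewrite mulrA divfK // gt_eqF.
rewrite mulrC ler_wpM2r //. by rewrite divr_ge0 // ltW.
Qed.

Lemma enormC (R:realType) (x y : R*R) : enorm (x - y) = enorm (y - x).
Proof. by rewrite /enorm -opprB /= !sqrrN. Qed.

Theorem proposition2p6 (R : realType) (O : set (R * R))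
  (p : nat -> R) (u : nat -> R * R -> R) (beta : R)
  (k : nat) (xs : 'I_k -> nat -> R * R) (xp : nat -> R * R) (i : 'I_k) :
  smooth_bounded_domain O ->
  (forall n, 1 < p n) ->
  p n @[n --> \oo] --> +oo ->
  (forall n, LE_solution O (p n) (u n)) ->
  ((p n)%:E * energy O (u n))%E @[n --> \oo] --> beta%:E ->
  (1 <= k)%N ->
  (forall j n, O (xs j n)) ->
  (forall j, p n * `|u n (xs j n)| `^ (p n - 1) @[n --> \oo] --> +oo) ->
  (* (P_1^k) *)
  (forall j j', j != j' ->
     enorm (xs j n - xs j' n) / mu_of (p n) (u n) (xs j n) @[n --> \oo] --> +oo) ->
  (* (P_2^k) *)
  (forall j, C1loc_cvg O (xs j) (fun n => mu_of (p n) (u n) (xs j n))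
     (fun n => rescale (p n) (u n) (xs j n) (mu_of (p n) (u n) (xs j n)))
     (@Ulim R)) ->
  (* (P_3^k) *)
  (exists C : R, 0 < C /\ \forall n \near \oo, forall x, O x ->
     p n * Rk (fun j => xs j n) x ^+ 2 * `|u n x| `^ (p n - 1) <= C) ->
  (forall n, O (xp n)) ->
  p n * `|u n (xp n)| `^ (p n - 1) @[n --> \oo] --> +oo ->
  (forall n, Rk (fun j => xs j n) (xp n) = enorm (xs i n - xp n)) ->
  enorm (xp n - xs i n) / mu_of (p n) (u n) (xs i n) @[n --> \oo] --> +oo ->
  mu_of (p n) (u n) (xs i n) / mu_of (p n) (u n) (xp n) @[n --> \oo] --> (0 : R).
Proof.
move=> _ _ _ _ _ _ _ Hqi _ _ [C [C0 HC]] HO Hq HRk Hd.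
have Hqi' := (proj1 (cvgryPgt _) (Hqi i) 0).
have Hq' := (proj1 (cvgryPgt _) Hq 0).
have Hd' := (proj1 (cvgryPgt _) Hd 0).
apply: (@squeeze_cvgr _ _ _ _ (fun=> 0)
  (fun n => Num.sqrt C * (enorm (xp n - xs i n) / mu_of (p n) (u n) (xs i n))^-1)).
- near=> n.
  have q0 : 0 < p n * `|u n (xp n)| `^ (p n - 1).
    by near: n; exact: Hq'.
  have qi0 : 0 < p n * `|u n (xs i n)| `^ (p n - 1).
    by near: n; exact: Hqi'.
  have da0 : 0 < enorm (xp n - xs i n) / mu_of (p n) (u n) (xs i n).
    by near: n; exact: Hd'.
  have a0 : 0 < mu_of (p n) (u n) (xs i n) by rewrite /mu_of powR_gt0.
  have d0 : 0 < enorm (xp n - xs i n).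
    by move: da0; rewrite pmulr_lgt0 // invr_gt0.
  have HCn : enorm (xp n - xs i n) ^+ 2 * (p n * `|u n (xp n)| `^ (p n - 1)) <= C.
    have HCn0 : forall x, O x -> p n * Rk (fun j => xs j n) x ^+ 2 * `|u n x| `^ (p n - 1) <= C.
      by near: n; exact: HC.
    have := HCn0 (xp n) (HO n).
    by rewrite HRk (@enormC _ (xs i n)) mulrA (mulrC (_ ^+ 2)).
  rewrite invf_div.
  exact: key.
- exact: cvg_cst.
- rewrite -[0](mulr0 (Num.sqrt C)).
  apply: cvgMr.
  by apply/gtr0_cvgV0 => //; near=> n; near: n; exact: Hd'.
Unshelve. all: by end_near.
Qed.
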